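(* Let $\mathcal{X}$ be a nonempty convex subset of $\mathbb{R}^n$ and let $\textbf{F}:\mathcal{X}\rightarrow I(\mathbb{R})$ be a strongly convex and $gH$-differentiable IVF with $gH$-Lipschitz gradient on $\mathcal{X}$. Then there exist $\sigma>0$ and $L>0$ such that, if $\bar{x}\in\mathcal{X}$ is an efficient solution of the IOP $\min_{x\in\mathcal{X}}\textbf{F}(x)$, the mapping $H_\alpha(x)=x-\alpha\, \mathcal{W}(\nabla \textbf{F}(x))$ with constant step size $\alpha\in\left[0, \frac{2\sigma}{L^2}\right]$ satisfies \[ \lVert H_\alpha(x)-H_\alpha(\bar{x}) \rVert \leq \lVert x-\bar{x} \rVert \quad\text{for all } x\in \mathcal{X}. \]
   Context: $I(\mathbb{R})$ is the set of closed bounded intervals $\textbf{A}=[\underline{a},\overline{a}]$, with Moore arithmetic $\oplus,\odot$. The $gH$-difference is $\textbf{A}\ominus_{gH}\textbf{B}=[\min\{\underline{a}-\underline{b},\overline{a}-\overline{b}\},\max\{\underline{a}-\underline{b},\overline{a}-\overline{b}\}]$. Dominance: $\textbf{A}\preceq\textbf{B}$ iff $\underline{a}\le\underline{b}$ and $\overline{a}\le\overline{b}$; $\textbf{A}\prec\textbf{B}$ iff $\textbf{A}\preceq\textbf{B}$ and $\textbf{A}\neq\textbf{B}$; $\not\preceq$, $\not\prec$ are the negations. An IVF is $\textbf{F}(x)=[\underline{f}(x),\overline{f}(x)]$. A point $\bar{x}\in\mathcal{X}$ is an efficient solution of $\min_{x\in\mathcal{X}}\textbf{F}(x)$ if $\textbf{F}(x)\not\prec\textbf{F}(\bar{x})$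 for all $x\neq\bar{x}$ in $\mathcal{X}$. $\textbf{F}$ is $gH$-differentiable at $\bar{x}$ if there are a linear IVF $\textbf{L}_{\bar{x}}(d)=\bigoplus_{i=1}^n d_i\odot\textbf{L}_{\bar{x}}(e_i)$ and an IVF $\textbf{E}$ with $(\textbf{F}(\bar{x}+d)\ominus_{gH}\textbf{F}(\bar{x}))\ominus_{gH}\textbf{L}_{\bar{x}}(d)=\lVert d\rVert\odot\textbf{E}(\textbf{F}(\bar{x});d)$ for small $\lVert d\rVert$, where $\textbf{E}\to\textbf{0}$ as $\lVert d\rVert\to0$. The $gH$-gradient is $\nabla\textbf{F}(x)=(D_1\textbf{F}(x),\ldots,D_n\textbf{F}(x))^T$, where $D_i\textbf{F}$ are partial $gH$-derivatives (defined via $\lim_{h\to0}\frac{1}{h}\odot(\textbf{G}_i(x_i+h)\ominus_{gH}\textbf{G}_i(x_i))$ along coordinate $i$). $\textbf{F}$ is strongly convex if $\textbf{F}(x)=\textbf{G}(x)\oplus\frac12\lVert x\rVert^2\odot[\sigma,\sigma]$ for some convex IVF $\textbf{G}$ and $\sigma>0$ (convex meaning $\textbf{G}(\lambda x+(1-\lambda)y)\preceq\lambda\odot\textbf{G}(x)\oplus(1-\lambda)\odot\textbf{G}(y)$). $\textbf{F}$ has $gH$-Lipschitz gradient if $\lVert\nabla\textbf{F}(x)\ominus_{gH}\nabla\textbf{F}(y)\rVert_{I(\mathbb{R})^n}\le M\lVert x-y\rVert$, where $\lVert\textbf{A}\rVert_{I(\mathbb{R})}=\max\{|\underline{a}|,|\overline{a}|\}$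 and $\lVert(\textbf{A}_1,\ldots,\textbf{A}_n)\rVert_{I(\mathbb{R})^n}=\sum_i\lVert\textbf{A}_i\rVert_{I(\mathbb{R})}$. For fixed $w,w'\in[0,1]$ with $w+w'=1$, $\mathcal{W}:I(\mathbb{R})^n\to\mathbb{R}^n$ is $\mathcal{W}(\textbf{A}_1,\ldots,\textbf{A}_n)=(w\underline{a}_1+w'\overline{a}_1,\ldots,w\underline{a}_n+w'\overline{a}_n)^T$. *)

(* Defs.v *)
From HB Require Import structures.
From mathcomp Require Import all_boot all_order all_algebra.
From mathcomp Require Import reals.
Set Implicit Arguments. Unset Strict Implicit. Unset Printing Implicit Defensive.
Import Order.TTheory GRing.Theory Num.Theory.
Local Open Scope ring_scope.

Section IVF.
Variable R : realType.

(* An interval [a_lo, a_hi] is represented by the pair (a_lo, a_hi);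
   being an interval (a_lo <= a_hi) is imposed as a hypothesis where needed. *)
Definition itv := (R * R)%type.

Definition is_itv (A : itv) : Prop := A.1 <= A.2.

Definition iadd (A B : itv) : itv := (A.1 + B.1, A.2 + B.2).
Definition ismul (c : R) (A : itv) : itv :=
  (Num.min (c * A.1) (c * A.2), Num.max (c * A.1) (c * A.2)).
Definition igH (A B : itv) : itv :=
  (Num.min (A.1 - B.1) (A.2 - B.2), Num.max (A.1 - B.1) (A.2 - B.2)).
Definition ile (A B : itv) : Prop := A.1 <= B.1 /\ A.2 <= B.2.
Definition ilt (A B : itv) : Prop := ile A B /\ A <> B.
Definition inorm (A : itv) : R := Num.max `|A.1| `|A.2|.
Definition inormn (n : nat) (A : 'I_n -> itv) : R := \sum_(i < n) inorm (A i).

Definition enorm (n : nat) (v : 'rV[R]_n) : R := Num.sqrt (\sum_(i < n) v 0 i ^+ 2).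

Definition ebasis (n : nat) (i : 'I_n) : 'rV[R]_n := \row_j (if j == i then 1 else 0).

Definition linIVF (n : nat) (Le : 'I_n -> itv) (d : 'rV[R]_n) : itv :=
  \big[iadd/(0, 0)]_(i < n) ismul (d 0 i) (Le i).

Definition is_IVF (n : nat) (F : 'rV[R]_n -> itv) : Prop := forall x, is_itv (F x).

Definition convex_set (n : nat) (X : 'rV[R]_n -> Prop) : Prop :=
  forall x y (l : R), X x -> X y -> 0 <= l <= 1 -> X (l *: x + (1 - l) *: y).

Definition gH_differentiable_at (n : nat) (F : 'rV[R]_n -> itv) (xb : 'rV[R]_n) : Prop :=
  exists (Le : 'I_n -> itv) (E : 'rV[R]_n -> itv) (delta : R), 0 < delta /\
    (forall d, enorm d < delta ->
       igH (igH (F (xb + d)) (F xb)) (linIVF Le d) = ismul (enorm d) (E d)) /\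
    (forall eps : R, 0 < eps -> exists eta : R, 0 < eta /\
       forall d, 0 < enorm d < eta -> inorm (E d) < eps).

Definition is_partial_gH (n : nat) (F : 'rV[R]_n -> itv) (x : 'rV[R]_n) (i : 'I_n)
    (A : itv) : Prop :=
  forall eps : R, 0 < eps -> exists delta : R, 0 < delta /\
    forall h : R, 0 < `|h| < delta ->
      inorm (igH (ismul h^-1 (igH (F (x + h *: ebasis i)) (F x))) A) < eps.

Definition is_gH_gradient (n : nat) (X : 'rV[R]_n -> Prop) (F : 'rV[R]_n -> itv)
    (gF : 'rV[R]_n -> 'I_n -> itv) : Prop :=
  forall x, X x -> forall i, is_partial_gH F x i (gF x i).

Definition convex_IVF_on (n : nat) (X : 'rV[R]_n -> Prop) (G : 'rV[R]_n -> itv) : Prop :=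
  forall x y (l : R), X x -> X y -> 0 <= l <= 1 ->
    ile (G (l *: x + (1 - l) *: y)) (iadd (ismul l (G x)) (ismul (1 - l) (G y))).

Definition strongly_convex_on (n : nat) (X : 'rV[R]_n -> Prop) (F : 'rV[R]_n -> itv) : Prop :=
  exists (G : 'rV[R]_n -> itv) (sigma : R), 0 < sigma /\
    (forall x, X x -> is_itv (G x)) /\ convex_IVF_on X G /\
    forall x, X x -> F x = iadd (G x) (ismul (2^-1 * enorm x ^+ 2) (sigma, sigma)).

Definition gH_Lipschitz_gradient_on (n : nat) (X : 'rV[R]_n -> Prop)
    (gF : 'rV[R]_n -> 'I_n -> itv) : Prop :=
  exists M : R, 0 < M /\ forall x y, X x -> X y ->
    inormn (fun i => igH (gF x i) (gF y i)) <= M * enorm (x - y).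

Definition efficient (n : nat) (X : 'rV[R]_n -> Prop) (F : 'rV[R]_n -> itv) (xb : 'rV[R]_n) : Prop :=
  X xb /\ forall x, X x -> x <> xb -> ~ ilt (F x) (F xb).

Definition Wmap (n : nat) (w w' : R) (A : 'I_n -> itv) : 'rV[R]_n :=
  \row_i (w * (A i).1 + w' * (A i).2).

End IVF.

(* Main.v *)
From HB Require Import structures.
From mathcomp Require Import all_boot all_order all_algebra.
From mathcomp Require Import reals ring lra.
From mathcomp Require Import all_classical all_reals all_analysis.
Require Import Defs.
Import Order.TTheory GRing.Theory Num.Theory.
Import numFieldNormedType.Exports.
Local Open Scope ring_scope.
Set Implicit Arguments. Unset Strict Implicit.


Lemma absr_cases (R : realType) (x : R) :
  (`|x| = x /\ 0 <= x) \/ (`|x| = - x /\ x <= 0).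
Proof.
case: (lerP 0 x) => h; [left; split=> //; exact: ger0_norm|right; split; last exact: ltW].
exact: ltr0_norm.
Qed.

Lemma minr_cases (R : realType) (x y : R) :
  (Num.min x y = x /\ x <= y) \/ (Num.min x y = y /\ y <= x).
Proof.
rewrite minr_absE; have [[-> h]|[-> h]] := absr_cases (x - y).
  by right; split; lra.
by left; split; lra.
Qed.

Lemma maxr_cases (R : realType) (x y : R) :
  (Num.max x y = y /\ x <= y) \/ (Num.max x y = x /\ y <= x).
Proof.
rewrite maxr_absE; have [[-> h]|[-> h]] := absr_cases (x - y).
  by right; split; lra.
by left; split; lra.
Qed.

Lemma maxabs_minmax (R : realType) (u v : R) :
  Num.max `|Num.min u v| `|Num.max u v| = Num.max `|u| `|v|.
Proof.
have [[-> h]|[-> h]] := minr_cases u v.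
  by have [[-> _]|[-> h2]] := maxr_cases u v => //; have -> : u = v by apply/le_anti/andP.
have [[-> h2]|[-> _]] := maxr_cases u v; last by rewrite maxC.
by have -> : u = v by apply/le_anti/andP.
Qed.

Lemma inorm_igH (R : realType) (A B : itv R) :
  inorm (igH A B) = Num.max `|A.1 - B.1| `|A.2 - B.2|.
Proof. by rewrite /inorm /igH /= maxabs_minmax. Qed.

Lemma ismulE (R : realType) (c : R) (A : itv R) : 0 <= c ->
  ismul c A = (c * Num.min A.1 A.2, c * Num.max A.1 A.2).
Proof. by move=> c0; rewrite /ismul minr_pMr // maxr_pMr. Qed.

Lemma inorm_ismul (R : realType) (c : R) (A : itv R) : 0 <= c ->
  inorm (ismul c A) = c * inorm A.
Proof.
move=> c0; rewrite ismulE // /inorm /= !normrM (ger0_norm c0) -maxr_pMr //.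
by rewrite maxabs_minmax.
Qed.

Lemma big_iadd (R : realType) (n : nat) (F : 'I_n -> itv R) :
  \big[@iadd R/(0, 0)]_(i < n) F i = (\sum_(i < n) (F i).1, \sum_(i < n) (F i).2).
Proof.
rewrite [LHS]surjective_pairing; congr pair.
  by apply: (big_morph (fun p : itv R => p.1)).
by apply: (big_morph (fun p : itv R => p.2)).
Qed.

Lemma linIVF_E (R : realType) (n : nat) (Le : 'I_n -> itv R) (d : 'rV[R]_n) :
  linIVF Le d = (\sum_(i < n) Num.min (d 0 i * (Le i).1) (d 0 i * (Le i).2),
                 \sum_(i < n) Num.max (d 0 i * (Le i).1) (d 0 i * (Le i).2)).
Proof. by rewrite /linIVF big_iadd. Qed.

Definition l1 (R : realType) (n : nat) (v : 'rV[R]_n) : R := \sum_(i < n) `|v 0 i|.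
Definition ssq (R : realType) (n : nat) (v : 'rV[R]_n) : R := \sum_(i < n) v 0 i ^+ 2.

Lemma enormE (R : realType) (n : nat) (v : 'rV[R]_n) : enorm v = Num.sqrt (ssq v).
Proof. by []. Qed.

Lemma ssq_ge0 (R : realType) (n : nat) (v : 'rV[R]_n) : 0 <= ssq v.
Proof. by apply: sumr_ge0 => i _; exact: sqr_ge0. Qed.

Lemma enorm_ge0 (R : realType) (n : nat) (v : 'rV[R]_n) : 0 <= enorm v.
Proof. exact: sqrtr_ge0. Qed.

Lemma enorm_sq (R : realType) (n : nat) (v : 'rV[R]_n) : enorm v ^+ 2 = ssq v.
Proof. by rewrite enormE sqr_sqrtr // ssq_ge0. Qed.

Lemma l1_ge0 (R : realType) (n : nat) (v : 'rV[R]_n) : 0 <= l1 v.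
Proof. by apply: sumr_ge0 => i _. Qed.

Lemma abs_le_l1 (R : realType) (n : nat) (v : 'rV[R]_n) i : `|v 0 i| <= l1 v.
Proof. by rewrite /l1 (bigD1 i) //= lerDl sumr_ge0. Qed.

Lemma ssq_le_l1 (R : realType) (n : nat) (v : 'rV[R]_n) : ssq v <= l1 v ^+ 2.
Proof.
rewrite /ssq expr2 {2}/l1 mulr_sumr; apply: ler_sum => i _.
rewrite -real_normK ?num_real // expr2 mulrC.
by apply: ler_wpM2r => //; exact: abs_le_l1.
Qed.

Lemma enorm_le_l1 (R : realType) (n : nat) (v : 'rV[R]_n) : enorm v <= l1 v.
Proof.
rewrite enormE -(ger0_norm (l1_ge0 v)) -sqrtr_sqr.
by apply: ler_wsqrtr; exact: ssq_le_l1.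
Qed.

Lemma abs_le_enorm (R : realType) (n : nat) (v : 'rV[R]_n) i : `|v 0 i| <= enorm v.
Proof.
rewrite enormE -sqrtr_sqr; apply: ler_wsqrtr.
by rewrite /ssq (bigD1 i) //= lerDl sumr_ge0 // => j _; exact: sqr_ge0.
Qed.

Lemma ssqZ (R : realType) (n : nat) (c : R) (v : 'rV[R]_n) : ssq (c *: v) = c ^+ 2 * ssq v.
Proof. by rewrite /ssq mulr_sumr; apply: eq_bigr => i _; rewrite mxE exprMn. Qed.

Lemma enormZ (R : realType) (n : nat) (c : R) (v : 'rV[R]_n) : enorm (c *: v) = `|c| * enorm v.
Proof. by rewrite !enormE ssqZ sqrtrM ?sqr_ge0 // sqrtr_sqr. Qed.

Lemma l1Z (R : realType) (n : nat) (c : R) (v : 'rV[R]_n) : l1 (c *: v) = `|c| * l1 v.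
Proof. by rewrite /l1 mulr_sumr; apply: eq_bigr => i _; rewrite mxE normrM. Qed.

Lemma enormN (R : realType) (n : nat) (v : 'rV[R]_n) : enorm (- v) = enorm v.
Proof. by rewrite -scaleN1r enormZ normrN normr1 mul1r. Qed.

Lemma ebasisE (R : realType) (n : nat) (i j : 'I_n) :
  (ebasis R i) 0 j = if j == i then 1 else 0.
Proof. by rewrite /ebasis mxE. Qed.

Lemma ssq_ebasis (R : realType) (n : nat) (i : 'I_n) : ssq (ebasis R i) = 1.
Proof.
rewrite /ssq (bigD1 i) //= ebasisE eqxx big1 ?addr0 ?expr1n // => j /negPf ji.
by rewrite ebasisE ji expr0n.
Qed.

Lemma enorm_hbasis (R : realType) (n : nat) (h : R) (i : 'I_n) :
  enorm (h *: ebasis R i) = `|h|.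
Proof. by rewrite enormZ enormE ssq_ebasis sqrtr1 mulr1. Qed.

Lemma ssq_convex (R : realType) (n : nat) (t : R) (x y : 'rV[R]_n) :
  ssq (x + t *: (y - x)) = (1 - t) * ssq x + t * ssq y - t * (1 - t) * ssq (y - x).
Proof.
rewrite /ssq.
have -> : \sum_(i < n) (x + t *: (y - x)) 0 i ^+ 2 =
   \sum_(i < n) ((1 - t) * x 0 i ^+ 2 + t * y 0 i ^+ 2 - t * (1 - t) * (y - x) 0 i ^+ 2).
  by apply: eq_bigr => i _; rewrite !mxE; ring.
by rewrite sumrB big_split /= -!mulr_sumr.
Qed.


Lemma minrC (R : realType) (x y : R) : Num.min x y = Num.min y x.
Proof. by rewrite !minr_absE distrC (addrC x). Qed.
Lemma maxrC (R : realType) (x y : R) : Num.max x y = Num.max y x.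
Proof. by rewrite !maxr_absE distrC (addrC x). Qed.
Lemma le_maxl (R : realType) (x y : R) : x <= Num.max x y.
Proof. by have [[-> ?]|[-> ?]] := maxr_cases x y; lra. Qed.
Lemma le_maxr (R : realType) (x y : R) : y <= Num.max x y.
Proof. by have [[-> ?]|[-> ?]] := maxr_cases x y; lra. Qed.
Lemma ge_minl (R : realType) (x y : R) : Num.min x y <= x.
Proof. by have [[-> ?]|[-> ?]] := minr_cases x y; lra. Qed.
Lemma ge_minr (R : realType) (x y : R) : Num.min x y <= y.
Proof. by have [[-> ?]|[-> ?]] := minr_cases x y; lra. Qed.
Lemma minrr (R : realType) (x : R) : Num.min x x = x.
Proof. by have [[-> ?]|[-> ?]] := minr_cases x x. Qed.
Lemma maxrr (R : realType) (x : R) : Num.max x x = x.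
Proof. by have [[-> ?]|[-> ?]] := maxr_cases x x. Qed.
Lemma minmax_le (R : realType) (x y : R) : Num.min x y <= Num.max x y.
Proof. by have [[-> ?]|[-> ?]] := minr_cases x y; have [[-> ?]|[-> ?]] := maxr_cases x y; lra. Qed.

Lemma min_mulminmax (R : realType) (c u v : R) :
  Num.min (c * Num.min u v) (c * Num.max u v) = Num.min (c * u) (c * v).
Proof.
have [[-> h]|[-> h]] := minr_cases u v.
  by have [[-> _]|[-> h2]] := maxr_cases u v => //; have -> : u = v by lra.
have [[-> h2]|[-> _]] := maxr_cases u v; last by rewrite minrC.
by have -> : u = v by lra.
Qed.

Lemma max_mulminmax (R : realType) (c u v : R) :
  Num.max (c * Num.min u v) (c * Num.max u v) = Num.max (c * u) (c * v).
Proof.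
have [[-> h]|[-> h]] := minr_cases u v.
  by have [[-> _]|[-> h2]] := maxr_cases u v => //; have -> : u = v by lra.
have [[-> h2]|[-> _]] := maxr_cases u v; last by rewrite maxrC.
by have -> : u = v by lra.
Qed.

Lemma eq_eps (R : realType) (x y : R) :
  (forall eps, 0 < eps -> `|x - y| <= eps) -> x = y.
Proof.
move=> h; apply/eqP; rewrite -subr_eq0 -normr_eq0; apply/eqP.
apply/le_anti/andP; split; last exact: normr_ge0.
by apply/ler_addgt0Pr => e e0; rewrite add0r; exact: h.
Qed.

Definition Pm (R : realType) (n : nat) (a b : 'I_n -> R) (e : 'rV[R]_n) : R :=
  \sum_(i < n) Num.min (e 0 i * a i) (e 0 i * b i).
Definition Qm (R : realType) (n : nat) (a b : 'I_n -> R) (e : 'rV[R]_n) : R :=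
  \sum_(i < n) Num.max (e 0 i * a i) (e 0 i * b i).

Definition dmin (R : realType) (n : nat) (F : 'rV[R]_n -> itv R) z e :=
  Num.min ((F (z + e)).1 - (F z).1) ((F (z + e)).2 - (F z).2).
Definition dmax (R : realType) (n : nat) (F : 'rV[R]_n -> itv R) z e :=
  Num.max ((F (z + e)).1 - (F z).1) ((F (z + e)).2 - (F z).2).

Lemma Pm_hbasis (R : realType) (n : nat) (a b : 'I_n -> R) (h : R) i : 0 <= h ->
  Pm a b (h *: ebasis R i) = h * Num.min (a i) (b i).
Proof.
move=> h0; rewrite /Pm (bigD1 i) //= big1 ?addr0.
  by rewrite mxE ebasisE eqxx mulr1 minr_pMr.
by move=> j /negPf ji; rewrite mxE ebasisE ji mulr0 !mul0r minrr.
Qed.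

Lemma Qm_hbasis (R : realType) (n : nat) (a b : 'I_n -> R) (h : R) i : 0 <= h ->
  Qm a b (h *: ebasis R i) = h * Num.max (a i) (b i).
Proof.
move=> h0; rewrite /Qm (bigD1 i) //= big1 ?addr0.
  by rewrite mxE ebasisE eqxx mulr1 maxr_pMr.
by move=> j /negPf ji; rewrite mxE ebasisE ji mulr0 !mul0r maxrr.
Qed.

Lemma model_lemma (R : realType) (n : nat) (F : 'rV[R]_n -> itv R)
  (gF : 'rV[R]_n -> 'I_n -> itv R) (z : 'rV[R]_n) :
  gH_differentiable_at F z -> (forall i, is_partial_gH F z i (gF z i)) ->
  (forall i, (gF z i).1 <= (gF z i).2) /\
  forall eps, 0 < eps -> exists delta, 0 < delta /\ forall e, enorm e < delta ->
    `|dmin F z e - Pm (fun i => (gF z i).1) (fun i => (gF z i).2) e| <= eps * enorm e /\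
    `|dmax F z e - Qm (fun i => (gF z i).1) (fun i => (gF z i).2) e| <= eps * enorm e.
Proof.
move=> [Le [E [d0 [d0p [heq hE]]]]] hgz.
have KB : forall e, enorm e < d0 ->
    `|dmin F z e - Pm (fun i => (Le i).1) (fun i => (Le i).2) e| <= enorm e * inorm (E e) /\
    `|dmax F z e - Qm (fun i => (Le i).1) (fun i => (Le i).2) e| <= enorm e * inorm (E e).
  move=> e he; have H := congr1 (@inorm R) (heq e he).
  rewrite inorm_ismul ?enorm_ge0 // inorm_igH linIVF_E /= in H.
  by rewrite -H; split; [exact: le_maxl| exact: le_maxr].
have rel : forall i, gF z i = (Num.min (Le i).1 (Le i).2, Num.max (Le i).1 (Le i).2).
  move=> i.
  suff h1 : forall eps, 0 < eps ->
      `|(gF z i).1 - Num.min (Le i).1 (Le i).2| <= eps /\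
      `|(gF z i).2 - Num.max (Le i).1 (Le i).2| <= eps.
    rewrite [LHS]surjective_pairing; congr pair; apply: eq_eps => e e0.
      by case: (h1 e e0).
    by case: (h1 e e0).
  move=> eps eps0.
  have e2 : 0 < eps / 2 by rewrite divr_gt0.
  have [eta [eta0 heta]] := hE _ e2.
  have [dp [dp0 hdp]] := hgz i _ e2.
  pose h := Num.min d0 (Num.min eta dp) / 2.
  have hm0 : 0 < Num.min d0 (Num.min eta dp).
    by have [[-> _]|[-> _]] := minr_cases d0 (Num.min eta dp) => //;
       have [[-> _]|[-> _]] := minr_cases eta dp.
  have h0 : 0 < h by rewrite divr_gt0.
  have hd0 : h < d0.
    have := ge_minl d0 (Num.min eta dp); rewrite /h; lra.
  have heta' : h < eta.
    have := ge_minr d0 (Num.min eta dp); have := ge_minl eta dp; rewrite /h; lra.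
  have hdp' : h < dp.
    have := ge_minr d0 (Num.min eta dp); have := ge_minr eta dp; rewrite /h; lra.
  have nh : enorm (h *: ebasis R i) = h by rewrite enorm_hbasis ger0_norm // ltW.
  have [k1 k2] := KB (h *: ebasis R i) ltac:(by rewrite nh).
  have hE1 : inorm (E (h *: ebasis R i)) < eps / 2.
    by apply: heta; rewrite nh h0.
  have := hdp h; rewrite gtr0_norm // h0 hdp' => /(_ isT).
  rewrite ismulE ?invr_ge0 ?(ltW h0) // inorm_igH /=.
  rewrite -/(dmin F z (h *: ebasis R i)) -/(dmax F z (h *: ebasis R i)).
  have hmm := minmax_le ((F (z + h *: ebasis R i)).1 - (F z).1) ((F (z + h *: ebasis R i)).2 - (F z).2).
  rewrite -/(dmin F z (h *: ebasis R i)) -/(dmax F z (h *: ebasis R i)) in hmm.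
  have -> : Num.min (dmin F z (h *: ebasis R i)) (dmax F z (h *: ebasis R i)) = dmin F z (h *: ebasis R i).
    by have [[-> _]|[-> ?]] := minr_cases (dmin F z (h *: ebasis R i)) (dmax F z (h *: ebasis R i)) => //; apply/le_anti/andP.
  have -> : Num.max (dmin F z (h *: ebasis R i)) (dmax F z (h *: ebasis R i)) = dmax F z (h *: ebasis R i).
    by have [[-> _]|[-> ?]] := maxr_cases (dmin F z (h *: ebasis R i)) (dmax F z (h *: ebasis R i)) => //; apply/le_anti/andP.
  move=> hlt.
  have a1 : `|h^-1 * dmin F z (h *: ebasis R i) - (gF z i).1| < eps / 2.
    by apply: le_lt_trans hlt; exact: le_maxl.
  have a2 : `|h^-1 * dmax F z (h *: ebasis R i) - (gF z i).2| < eps / 2.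
    by apply: le_lt_trans hlt; exact: le_maxr.
  rewrite Pm_hbasis ?(ltW h0) // nh in k1.
  rewrite Qm_hbasis ?(ltW h0) // nh in k2.
  set m1 := dmin F z (h *: ebasis R i) in k1 a1.
  set m2 := dmax F z (h *: ebasis R i) in k2 a2.
  set L1 := Num.min (Le i).1 (Le i).2 in k1 *.
  set L2 := Num.max (Le i).1 (Le i).2 in k2 *.
  set g1 := (gF z i).1 in a1 *. set g2 := (gF z i).2 in a2 *.
  set ee := inorm _ in k1 k2 hE1.
  have ee0 : 0 <= ee by rewrite /ee /inorm; have := le_maxl `|(E (h *: ebasis R i)).1| `|(E (h *: ebasis R i)).2|; have := normr_ge0 (E (h *: ebasis R i)).1; lra.
  have hk1 : `|h^-1 * m1 - L1| <= eps / 2.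
    have -> : h^-1 * m1 - L1 = h^-1 * (m1 - h * L1) by field; lra.
    rewrite normrM gtr0_norm ?invr_gt0 // ler_pdivrMl //.
    apply: le_trans k1 _; rewrite ler_wpM2l //; [exact: ltW|exact: ltW].
  have hk2 : `|h^-1 * m2 - L2| <= eps / 2.
    have -> : h^-1 * m2 - L2 = h^-1 * (m2 - h * L2) by field; lra.
    rewrite normrM gtr0_norm ?invr_gt0 // ler_pdivrMl //.
    apply: le_trans k2 _; rewrite ler_wpM2l //; [exact: ltW|exact: ltW].
  split.
    have := ler_normB (h^-1 * m1 - L1) (h^-1 * m1 - g1) .
    have -> : h^-1 * m1 - L1 - (h^-1 * m1 - g1) = g1 - L1 by ring.
    rewrite distrC in a1; move: a1 hk1; rewrite -[`|h^-1 * m1 - g1|]normrN opprB; lra.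
  have := ler_normB (h^-1 * m2 - L2) (h^-1 * m2 - g2) .
  have -> : h^-1 * m2 - L2 - (h^-1 * m2 - g2) = g2 - L2 by ring.
  move: a2 hk2; lra.
split.
  by move=> i; rewrite rel /=; exact: minmax_le.
move=> eps eps0.
have [eta [eta0 heta]] := hE _ eps0.
exists (Num.min d0 eta); split.
  by have [[-> _]|[-> _]] := minr_cases d0 eta.
move=> e he.
have hd0 : enorm e < d0 by apply: lt_le_trans he (ge_minl _ _).
have heta' : enorm e < eta by apply: lt_le_trans he (ge_minr _ _).
have [k1 k2] := KB e hd0.
have PE : Pm (fun i => (gF z i).1) (fun i => (gF z i).2) e = Pm (fun i => (Le i).1) (fun i => (Le i).2) e.
  by apply: eq_bigr => i _; rewrite rel /= min_mulminmax.
have QE : Qm (fun i => (gF z i).1) (fun i => (gF z i).2) e = Qm (fun i => (Le i).1) (fun i => (Le i).2) e.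
  by apply: eq_bigr => i _; rewrite rel /= max_mulminmax.
rewrite PE QE.
have bnd : enorm e * inorm (E e) <= eps * enorm e.
  have [e0|e0] := eqVneq (enorm e) 0.
    by rewrite e0 mul0r mulr0.
  have ep : 0 < enorm e by rewrite lt_def e0 enorm_ge0.
  rewrite mulrC ler_wpM2r ?enorm_ge0 //; apply: ltW; apply: heta.
  by rewrite ep heta'.
by split; apply: le_trans bnd.
Qed.


Definition ga (R : realType) (n : nat) (gF : 'rV[R]_n -> 'I_n -> itv R) z := fun i => (gF z i).1.
Definition gb (R : realType) (n : nat) (gF : 'rV[R]_n -> 'I_n -> itv R) z := fun i => (gF z i).2.

Definition model_at (R : realType) (n : nat) (F : 'rV[R]_n -> itv R)
  (gF : 'rV[R]_n -> 'I_n -> itv R) z :=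
  forall eps, 0 < eps -> exists delta, 0 < delta /\ forall e, enorm e < delta ->
    `|dmin F z e - Pm (ga gF z) (gb gF z) e| <= eps * enorm e /\
    `|dmax F z e - Qm (ga gF z) (gb gF z) e| <= eps * enorm e.

Definition sc_prop (R : realType) (n : nat) (F : 'rV[R]_n -> itv R) (X : 'rV[R]_n -> Prop) (s0 : R) :=
  forall z1 z2 t, X z1 -> X z2 -> 0 <= t <= 1 ->
   X (z1 + t *: (z2 - z1)) /\
   (F (z1 + t *: (z2 - z1))).1 <= (F z1).1 + t * ((F z2).1 - (F z1).1) - s0 / 2 * (t * (1 - t)) * ssq (z2 - z1) /\
   (F (z1 + t *: (z2 - z1))).2 <= (F z1).2 + t * ((F z2).2 - (F z1).2) - s0 / 2 * (t * (1 - t)) * ssq (z2 - z1).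

Lemma sc_from_hyp (R : realType) (n : nat) (F : 'rV[R]_n -> itv R) (X : 'rV[R]_n -> Prop) :
  convex_set X -> strongly_convex_on X F -> exists s0, 0 < s0 /\ sc_prop F X s0.
Proof.
move=> hX [G [s0 [s0p [hG [hcv hF]]]]]; exists s0; split => //.
move=> z1 z2 t X1 X2 /andP[t0 t1].
have pE : t *: z2 + (1 - t) *: z1 = z1 + t *: (z2 - z1).
  by apply/rowP => j; rewrite !mxE; ring.
have Xp : X (z1 + t *: (z2 - z1)) by rewrite -pE; apply: hX => //; rewrite t0 t1.
split => //.
have := hcv z2 z1 t X2 X1; rewrite t0 t1 pE => /(_ isT) [c1 c2].
have iv1 := hG z1 X1; have iv2 := hG z2 X2.
rewrite /is_itv in iv1 iv2.
rewrite !ismulE ?subr_ge0 // /= in c1 c2.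
have mn : forall (a b : R), a <= b -> Num.min a b = a.
  by move=> a b ab; have [[-> _]|[-> ?]] := minr_cases a b => //; apply/le_anti/andP.
have mx : forall (a b : R), a <= b -> Num.max a b = b.
  by move=> a b ab; have [[-> _]|[-> ?]] := maxr_cases a b => //; apply/le_anti/andP.
rewrite !mn // !mx // in c1 c2.
rewrite (hF _ Xp) (hF _ X1) (hF _ X2) /iadd /ismul /= !minrr !maxrr !enorm_sq ssq_convex.
set s1 := ssq z1 in c1 c2 *; set s2 := ssq z2 in c1 c2 *; set s12 := ssq (z2 - z1).
set Gp := G (z1 + t *: (z2 - z1)) in c1 c2 *.
split.
  have E : (G z1).1 + 2^-1 * s1 * s0 + t * ((G z2).1 + 2^-1 * s2 * s0 - ((G z1).1 + 2^-1 * s1 * s0)) -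
     s0 / 2 * (t * (1 - t)) * s12 - (Gp.1 + 2^-1 * ((1 - t) * s1 + t * s2 - t * (1 - t) * s12) * s0)
     = t * (G z2).1 + (1 - t) * (G z1).1 - Gp.1 by ring.
  move: E c1; lra.
have E : (G z1).2 + 2^-1 * s1 * s0 + t * ((G z2).2 + 2^-1 * s2 * s0 - ((G z1).2 + 2^-1 * s1 * s0)) -
   s0 / 2 * (t * (1 - t)) * s12 - (Gp.2 + 2^-1 * ((1 - t) * s1 + t * s2 - t * (1 - t) * s12) * s0)
   = t * (G z2).2 + (1 - t) * (G z1).2 - Gp.2 by ring.
move: E c2; lra.
Qed.

Lemma minN (R : realType) (x y : R) : Num.min (- x) (- y) = - Num.max x y.
Proof. rewrite minr_absE maxr_absE; have -> : - x - - y = - (x - y) by ring. rewrite normrN; ring. Qed.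
Lemma maxN (R : realType) (x y : R) : Num.max (- x) (- y) = - Num.min x y.
Proof. rewrite minr_absE maxr_absE; have -> : - x - - y = - (x - y) by ring. rewrite normrN; ring. Qed.

Lemma PmZ (R : realType) (n : nat) (a b : 'I_n -> R) (t : R) e : 0 <= t ->
  Pm a b (t *: e) = t * Pm a b e.
Proof. by move=> t0; rewrite /Pm mulr_sumr; apply: eq_bigr => i _; rewrite mxE -!mulrA minr_pMr. Qed.
Lemma QmZ (R : realType) (n : nat) (a b : 'I_n -> R) (t : R) e : 0 <= t ->
  Qm a b (t *: e) = t * Qm a b e.
Proof. by move=> t0; rewrite /Qm mulr_sumr; apply: eq_bigr => i _; rewrite mxE -!mulrA maxr_pMr. Qed.
Lemma PmN (R : realType) (n : nat) (a b : 'I_n -> R) e : Pm a b (- e) = - Qm a b e.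
Proof. by rewrite /Pm /Qm -sumrN; apply: eq_bigr => i _; rewrite mxE !mulNr minN. Qed.
Lemma QmN (R : realType) (n : nat) (a b : 'I_n -> R) e : Qm a b (- e) = - Pm a b e.
Proof. by rewrite /Pm /Qm -sumrN; apply: eq_bigr => i _; rewrite mxE !mulNr maxN. Qed.

Lemma ge_eps (R : realType) (x y C : R) : 0 <= C ->
  (forall eps, 0 < eps -> y - eps * C <= x) -> y <= x.
Proof.
move=> C0 h; apply/ler_addgt0Pr => e e0.
have q0 : 0 < e / (C + 1) by rewrite divr_gt0 //; lra.
have := h _ q0.
have : e / (C + 1) * C <= e.
  rewrite mulrAC ler_pdivrMr; last lra.
  apply: ler_wpM2l; lra.
lra.
Qed.

Lemma tau_choice (R : realType) (eps d1 d2 l : R) : 0 < eps -> 0 < d1 -> 0 < d2 -> 0 <= l ->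
  exists tau, 0 < tau /\ tau <= eps /\ tau <= 1 /\ tau * l < d1 /\ tau * l < d2.
Proof.
move=> e0 p1 p2 l0.
have m1 := ge_minl (Num.min eps 1) (Num.min d1 d2 / (l + 1)).
have m2 := ge_minr (Num.min eps 1) (Num.min d1 d2 / (l + 1)).
have m3 := ge_minl eps 1. have m4 := ge_minr eps 1.
have m5 := ge_minl d1 d2. have m6 := ge_minr d1 d2.
have dm : 0 < Num.min d1 d2 by have [[-> _]|[-> _]] := minr_cases d1 d2.
set q := Num.min d1 d2 / (l + 1) in m1 m2 *.
set m := Num.min (Num.min eps 1) q in m1 m2 *.
have q0 : 0 < q by rewrite divr_gt0 //; lra.
have qE : q * (l + 1) = Num.min d1 d2 by rewrite /q; field; lra.
have mp : 0 < m by rewrite /m; have [[-> _]|[-> _]] := minr_cases (Num.min eps 1) q => //;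
   have [[-> _]|[-> _]] := minr_cases eps 1 => //; lra.
clearbody m q.
exists (m / 2); split; first by rewrite divr_gt0.
split; first lra. split; first lra.
have : m / 2 * l <= q / 2 * l by rewrite ler_wpM2r //; lra.
have ql : 0 <= q * l by rewrite mulr_ge0 // ltW.
have : q / 2 * l < q * (l + 1).
  have E : q * (l + 1) - q / 2 * l = q * l / 2 + q by field.
  rewrite -subr_gt0 E; apply: ltr_wpDl => //; exact: divr_ge0.
lra.
Qed.

Lemma PQ_mono (R : realType) (n : nat) (F : 'rV[R]_n -> itv R) (gF : 'rV[R]_n -> 'I_n -> itv R)
  (X : 'rV[R]_n -> Prop) (s0 : R) :
  0 < s0 -> sc_prop F X s0 -> (forall z, X z -> model_at F gF z) ->
  forall z1 z2, X z1 -> X z2 ->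
  s0 * ssq (z2 - z1) <= Pm (ga gF z2) (gb gF z2) (z2 - z1) - Pm (ga gF z1) (gb gF z1) (z2 - z1) /\
  s0 * ssq (z2 - z1) <= Qm (ga gF z2) (gb gF z2) (z2 - z1) - Qm (ga gF z1) (gb gF z1) (z2 - z1).
Proof.
move=> s0p hS hM z1 z2 X1 X2.
set e := z2 - z1.
set s := ssq e. set l := enorm e.
have s_ge0 : 0 <= s by exact: ssq_ge0.
have l_ge0 : 0 <= l by exact: enorm_ge0.
have sE : ssq (z1 - z2) = s.
  by rewrite /s /e -opprB -scaleN1r ssqZ; rewrite expr2 mulN1r opprK mul1r.
have lE : enorm (z1 - z2) = l by rewrite /l /e -opprB enormN.
have C0 : 0 <= s0 * s + 2 * l by have := mulr_ge0 (ltW s0p) s_ge0; lra.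
split; apply: (ge_eps C0) => eps eps0.
- have [d1 [d1p hd1]] := hM z1 X1 eps eps0.
  have [d2 [d2p hd2]] := hM z2 X2 eps eps0.
  have [tau [t0 [te [t1 [tl1 tl2]]]]] := tau_choice eps0 d1p d2p l_ge0.
  have t01 : 0 <= tau <= 1 by rewrite (ltW t0) t1.
  have [_ [sl1 sh1]] := hS z1 z2 tau X1 X2 t01.
  have [_ [sl2 sh2]] := hS z2 z1 tau X2 X1 t01.
  rewrite sE in sl2 sh2.
  have n1 : enorm (tau *: e) = tau * l by rewrite enormZ ger0_norm // ltW.
  have n2 : enorm (tau *: (z1 - z2)) = tau * l by rewrite enormZ lE ger0_norm // ltW.
  have [k1 _] := hd1 (tau *: e) ltac:(by rewrite n1).
  have [_ k2] := hd2 (tau *: (z1 - z2)) ltac:(by rewrite n2).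
  rewrite n1 PmZ ?(ltW t0) // in k1.
  have ez : z1 - z2 = - e by rewrite /e opprB.
  have qq : Qm (ga gF z2) (gb gF z2) (tau *: (z1 - z2)) = - (tau * Pm (ga gF z2) (gb gF z2) e).
    by rewrite ez scalerN QmN PmZ // ltW.
  rewrite n2 qq in k2.
  rewrite /dmin /e in k1; rewrite /dmax /e in k2.
  set P1 := Pm _ _ (z2 - z1) in k1 *. set P2 := Pm _ _ (z2 - z1) in k2 *.
  set K := s0 / 2 * (tau * (1 - tau)) * s in sl1 sh1 sl2 sh2.
  have g1 := ge_minl ((F (z1 + tau *: (z2 - z1))).1 - (F z1).1) ((F (z1 + tau *: (z2 - z1))).2 - (F z1).2).
  have g2 := ge_minr ((F (z1 + tau *: (z2 - z1))).1 - (F z1).1) ((F (z1 + tau *: (z2 - z1))).2 - (F z1).2).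
  have key : tau * (s0 * (1 - tau) * s - 2 * eps * l) <= tau * (P2 - P1).
    have KE : tau * (s0 * (1 - tau) * s - 2 * eps * l) = 2 * K - 2 * (eps * (tau * l)) by rewrite /K; field.
    rewrite KE.
    have [[hm _]|[hm _]] := maxr_cases ((F (z2 + tau *: (z1 - z2))).1 - (F z2).1) ((F (z2 + tau *: (z1 - z2))).2 - (F z2).2);
      rewrite hm in k2; move: k1 k2 g1 g2 sl1 sh1 sl2 sh2;
      rewrite !ler_norml; lra.
  rewrite ler_pM2l // in key.
  have : tau * (s0 * s) <= eps * (s0 * s) by rewrite ler_wpM2r // mulr_ge0 // ltW.
  move: key; lra.
- have [d1 [d1p hd1]] := hM z1 X1 eps eps0.
  have [d2 [d2p hd2]] := hM z2 X2 eps eps0.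
  have [tau [t0 [te [t1 [tl1 tl2]]]]] := tau_choice eps0 d1p d2p l_ge0.
  have t01 : 0 <= tau <= 1 by rewrite (ltW t0) t1.
  have [_ [sl1 sh1]] := hS z1 z2 tau X1 X2 t01.
  have [_ [sl2 sh2]] := hS z2 z1 tau X2 X1 t01.
  rewrite sE in sl2 sh2.
  have n1 : enorm (tau *: e) = tau * l by rewrite enormZ ger0_norm // ltW.
  have n2 : enorm (tau *: (z1 - z2)) = tau * l by rewrite enormZ lE ger0_norm // ltW.
  have [_ k1] := hd1 (tau *: e) ltac:(by rewrite n1).
  have [k2 _] := hd2 (tau *: (z1 - z2)) ltac:(by rewrite n2).
  rewrite n1 QmZ ?(ltW t0) // in k1.
  have ez : z1 - z2 = - e by rewrite /e opprB.
  have qq : Pm (ga gF z2) (gb gF z2) (tau *: (z1 - z2)) = - (tau * Qm (ga gF z2) (gb gF z2) e).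
    by rewrite ez scalerN PmN QmZ // ltW.
  rewrite n2 qq in k2.
  rewrite /dmax /e in k1; rewrite /dmin /e in k2.
  set P1 := Qm _ _ (z2 - z1) in k1 *. set P2 := Qm _ _ (z2 - z1) in k2 *.
  set K := s0 / 2 * (tau * (1 - tau)) * s in sl1 sh1 sl2 sh2.
  have g1 := ge_minl ((F (z2 + tau *: (z1 - z2))).1 - (F z2).1) ((F (z2 + tau *: (z1 - z2))).2 - (F z2).2).
  have g2 := ge_minr ((F (z2 + tau *: (z1 - z2))).1 - (F z2).1) ((F (z2 + tau *: (z1 - z2))).2 - (F z2).2).
  have key : tau * (s0 * (1 - tau) * s - 2 * eps * l) <= tau * (P2 - P1).
    have KE : tau * (s0 * (1 - tau) * s - 2 * eps * l) = 2 * K - 2 * (eps * (tau * l)) by rewrite /K; field.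
    rewrite KE.
    have [[hm _]|[hm _]] := maxr_cases ((F (z1 + tau *: (z2 - z1))).1 - (F z1).1) ((F (z1 + tau *: (z2 - z1))).2 - (F z1).2);
      rewrite hm in k1; move: k1 k2 g1 g2 sl1 sh1 sl2 sh2;
      rewrite !ler_norml; lra.
  rewrite ler_pM2l // in key.
  have : tau * (s0 * s) <= eps * (s0 * s) by rewrite ler_wpM2r // mulr_ge0 // ltW.
  move: key; lra.
Qed.


Definition mmf (R : realType) (n : nat) (a b : 'I_n -> R) (e : 'rV[R]_n) :=
  \sum_(i < n) e 0 i * (a i + b i).
Definition omf (R : realType) (n : nat) (a b : 'I_n -> R) (e : 'rV[R]_n) :=
  \sum_(i < n) `|e 0 i| * (b i - a i).
Definition etf (R : realType) (n : nat) (a b : 'I_n -> R) (e : 'rV[R]_n) :=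
  \sum_(i < n) e 0 i * (b i - a i).
Definition kkf (R : realType) (n : nat) (w w' : R) (a b : 'I_n -> R) (e : 'rV[R]_n) :=
  \sum_(i < n) e 0 i * (w * a i + w' * b i).

Lemma Pm_dec (R : realType) (n : nat) (a b : 'I_n -> R) e : (forall i, a i <= b i) ->
  2 * Pm a b e = mmf a b e - omf a b e.
Proof.
move=> hab; rewrite /Pm /mmf /omf -sumrB mulr_sumr; apply: eq_bigr => i _.
rewrite minr_absE -mulrBr normrM (ler0_norm (_ : a i - b i <= 0)); last by rewrite subr_le0.
by field.
Qed.

Lemma Qm_dec (R : realType) (n : nat) (a b : 'I_n -> R) e : (forall i, a i <= b i) ->
  2 * Qm a b e = mmf a b e + omf a b e.
Proof.
move=> hab; rewrite /Qm /mmf /omf -big_split mulr_sumr; apply: eq_bigr => i _ /=.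
rewrite maxr_absE -mulrBr normrM (ler0_norm (_ : a i - b i <= 0)); last by rewrite subr_le0.
by field.
Qed.

Lemma kk_dec (R : realType) (n : nat) (w w' : R) (a b : 'I_n -> R) e : w + w' = 1 ->
  2 * kkf w w' a b e = mmf a b e + (w' - w) * etf a b e.
Proof.
move=> ww; rewrite /kkf /mmf /etf mulr_sumr mulr_sumr -big_split; apply: eq_bigr => i _ /=.
have -> : w' = 1 - w by rewrite -ww; ring.
ring.
Qed.

Lemma et_le_om (R : realType) (n : nat) (a b : 'I_n -> R) e : (forall i, a i <= b i) ->
  `|etf a b e| <= omf a b e.
Proof.
move=> hab; apply: le_trans (ler_norm_sum _ _ _) _; apply: ler_sum => i _.
by rewrite normrM (ger0_norm (_ : 0 <= b i - a i)) // subr_ge0.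
Qed.

Lemma same_sign_mono (R : realType) (n : nat) (w w' : R) (a1 b1 a2 b2 : 'I_n -> R) e c :
  0 <= w <= 1 -> 0 <= w' <= 1 -> w + w' = 1 ->
  (forall i, a1 i <= b1 i) -> (forall i, a2 i <= b2 i) ->
  `|etf a1 b1 e| = omf a1 b1 e -> `|etf a2 b2 e| = omf a2 b2 e ->
  (0 <= etf a1 b1 e /\ 0 <= etf a2 b2 e) \/ (etf a1 b1 e <= 0 /\ etf a2 b2 e <= 0) ->
  c <= Pm a2 b2 e - Pm a1 b1 e -> c <= Qm a2 b2 e - Qm a1 b1 e ->
  c <= kkf w w' a2 b2 e - kkf w w' a1 b1 e.
Proof.
move=> /andP[w0 w1] /andP[w0' w1'] ww h1 h2 s1 s2 sg hP hQ.
have P1 := Pm_dec e h1. have P2 := Pm_dec e h2.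
have Q1 := Qm_dec e h1. have Q2 := Qm_dec e h2.
have K1 := kk_dec a1 b1 e ww. have K2 := kk_dec a2 b2 e ww.
set s := w' - w in K1 K2.
have sp : 0 <= 1 + s by rewrite /s; lra.
have sm : 0 <= 1 - s by rewrite /s; lra.
have dP : (1 - s) * c <= (1 - s) * (Pm a2 b2 e - Pm a1 b1 e) by rewrite ler_wpM2l.
have dQ : (1 + s) * c <= (1 + s) * (Qm a2 b2 e - Qm a1 b1 e) by rewrite ler_wpM2l.
case: sg => [[g1 g2]|[g1 g2]].
- rewrite ger0_norm // in s1; rewrite ger0_norm // in s2.
  have E : 4 * (kkf w w' a2 b2 e - kkf w w' a1 b1 e) =
     (1 + s) * (2 * Qm a2 b2 e - 2 * Qm a1 b1 e) + (1 - s) * (2 * Pm a2 b2 e - 2 * Pm a1 b1 e).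
    rewrite Q1 Q2 P1 P2 -s1 -s2.
    have -> : 4 * (kkf w w' a2 b2 e - kkf w w' a1 b1 e) =
      2 * (2 * kkf w w' a2 b2 e) - 2 * (2 * kkf w w' a1 b1 e) by ring.
    rewrite K1 K2; ring.
  move: E dP dQ; lra.
- rewrite ler0_norm // in s1; rewrite ler0_norm // in s2.
  have E : 4 * (kkf w w' a2 b2 e - kkf w w' a1 b1 e) =
     (1 - s) * (2 * Qm a2 b2 e - 2 * Qm a1 b1 e) + (1 + s) * (2 * Pm a2 b2 e - 2 * Pm a1 b1 e).
    rewrite Q1 Q2 P1 P2 -s1 -s2.
    have -> : 4 * (kkf w w' a2 b2 e - kkf w w' a1 b1 e) =
      2 * (2 * kkf w w' a2 b2 e) - 2 * (2 * kkf w w' a1 b1 e) by ring.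
    rewrite K1 K2; ring.
  have dP' : (1 + s) * c <= (1 + s) * (Pm a2 b2 e - Pm a1 b1 e) by rewrite ler_wpM2l.
  have dQ' : (1 - s) * c <= (1 - s) * (Qm a2 b2 e - Qm a1 b1 e) by rewrite ler_wpM2l.
  move: E dP' dQ'; lra.
Qed.

Lemma ssq_sub_scale (R : realType) (n : nat) (d g : 'rV[R]_n) (al : R) :
  ssq (d - al *: g) = ssq d - 2 * al * (\sum_(i < n) d 0 i * g 0 i) + al ^+ 2 * ssq g.
Proof.
rewrite /ssq.
have -> : \sum_(i < n) (d - al *: g) 0 i ^+ 2 =
   \sum_(i < n) (d 0 i ^+ 2 - 2 * al * (d 0 i * g 0 i) + al ^+ 2 * g 0 i ^+ 2).
  by apply: eq_bigr => i _; rewrite !mxE; ring.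
by rewrite big_split sumrB /= -!mulr_sumr.
Qed.

Lemma contraction (R : realType) (n : nat) (d g : 'rV[R]_n) (sg L al : R) :
  0 < sg -> 0 < L -> 0 <= al <= 2 * sg / L ^+ 2 ->
  sg * ssq d <= \sum_(i < n) d 0 i * g 0 i -> ssq g <= L ^+ 2 * ssq d ->
  enorm (d - al *: g) <= enorm d.
Proof.
move=> sg0 L0 /andP[a0 a1] hm hl.
rewrite !enormE; apply: ler_wsqrtr; rewrite ssq_sub_scale.
set S := \sum_(i < n) _ in hm *.
have L20 : 0 < L ^+ 2 by rewrite exprn_gt0.
have h1 : al ^+ 2 * ssq g <= al ^+ 2 * (L ^+ 2 * ssq d) by rewrite ler_wpM2l // sqr_ge0.
have h2 : al * L ^+ 2 <= 2 * sg.
  by rewrite -ler_pdivlMr //.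
have sd : 0 <= ssq d by exact: ssq_ge0.
have h3 : al ^+ 2 * (L ^+ 2 * ssq d) <= al * (2 * sg * ssq d).
  have -> : al ^+ 2 * (L ^+ 2 * ssq d) = al * ((al * L ^+ 2) * ssq d) by ring.
  by rewrite ler_wpM2l // ler_wpM2r.
have h4 : al * (2 * sg * ssq d) <= 2 * al * S.
  have -> : al * (2 * sg * ssq d) = 2 * al * (sg * ssq d) by ring.
  by rewrite ler_wpM2l // mulr_ge0.
lra.
Qed.

Local Open Scope classical_set_scope.


Lemma two_point (R : realType) (al be : R) (dl : R -> R) : al < be ->
  (forall t, al <= t <= be -> 0 < dl t) ->
  exists t t', [/\ al <= t, t < t', t' <= be, t' - t < dl t & t' - t < dl t'].
Proof.
move=> ab dpos.
have [//|H] := pselect (exists t t', [/\ al <= t, t < t', t' <= be, t' - t < dl t & t' - t < dl t']).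
have sep : forall t t', al <= t -> t < t' -> t' <= be -> dl t <= t' - t \/ dl t' <= t' - t.
  move=> t t' h1 h2 h3; case: (leP (dl t) (t' - t)) => c1; first by left.
  case: (leP (dl t') (t' - t)) => c2; first by right.
  by exfalso; apply: H; exists t, t'; split.
pose S (k : nat) := [set t : R | al <= t <= be /\ k.+1%:R^-1 <= dl t].
have sepS : forall k t t', S k t -> S k t' -> t != t' -> k.+1%:R^-1 <= `|t - t'|.
  move=> k t t'; rewrite /S /= => -[/andP[a1 b1] h1] [/andP[a2 b2] h2] ne.
  case: (ltP t t') => c.
    rewrite distrC ger0_norm; last by rewrite subr_ge0 ltW.
    by have [h|h] := sep t t' a1 c b2; [apply: le_trans h1 h|apply: le_trans h2 h].
  have c' : t' < t by rewrite lt_def c andbT.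
  rewrite ger0_norm; last by rewrite subr_ge0.
  by have [h|h] := sep t' t a2 c' b1; [apply: le_trans h2 h|apply: le_trans h1 h].
pose G (k : nat) := ~` S k.
have kpos : forall k : nat, 0 < k.+1%:R^-1 :> R by move=> k; rewrite invr_gt0 ltr0n.
have oG : forall k, open (G k).
  move=> k; rewrite openE => x Gx; rewrite /interior; apply/nbhs_ballP.
  set r := k.+1%:R^-1 / 2 :> R.
  have r0 : 0 < r by rewrite divr_gt0 // kpos.
  have [[s [Ss sx]]|none] := pselect (exists s, S k s /\ `|x - s| < r).
    have sx0 : s != x by apply/negP => /eqP sx'; apply: Gx; rewrite -sx'.
    have d0 : 0 < `|x - s| by rewrite normr_gt0 subr_eq0 eq_sym.
    exists (Num.min r `|x - s|) => /=.
      by have [[-> _]|[-> _]] := minr_cases r `|x - s|.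
    move=> y bxy Sy.
    have b1 : `|x - y| < r by apply: lt_le_trans bxy _; exact: ge_minl.
    have b2 : `|x - y| < `|x - s| by apply: lt_le_trans bxy _; exact: ge_minr.
    have ys : y != s by apply/negP => /eqP ys; move: b2; rewrite ys ltxx.
    have h1 := sepS k y s Sy Ss ys.
    have h2 := ler_distD x y s.
    rewrite distrC in b1; rewrite /r in b1 sx.
    move: h1 h2 b1 sx; move: (k.+1%:R^-1 : R) => q; lra.
  exists r => // y bxy Sy; apply: none; exists y; split => //.
have dG : forall k, dense (G k).
  move=> k O [p Op] oO.
  have : nbhs p O by rewrite openE in oO; exact: oO p Op.
  move=> /nbhs_ballP [r r0 bO].
  have {}r0 : 0 < r := r0.
  set rho := Num.min r k.+1%:R^-1 / 2.
  have m1 := ge_minl r k.+1%:R^-1. have m2 := ge_minr r k.+1%:R^-1.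
  have kp := kpos k.
  have rho0 : 0 < rho.
    by rewrite divr_gt0 //; have [[-> _]|[-> _]] := minr_cases r k.+1%:R^-1.
  have Op' : O (p + rho).
    apply: bO; rewrite /ball /= opprD addrA subrr add0r normrN gtr0_norm //.
    move: m1; rewrite /rho; move: (Num.min r k.+1%:R^-1) => q.
    lra.
  case: (pselect (S k p)) => Sp.
    exists (p + rho); split => // Sq.
    have ne : p != p + rho.
      apply/eqP => h; move: rho0.
      have -> : rho = 0 by rewrite -(addKr p rho) -h addNr.
      by rewrite ltxx.
    have := sepS k p (p + rho) Sp Sq ne.
    rewrite opprD addrA subrr add0r normrN gtr0_norm //.
    have mpos : 0 < Num.min r k.+1%:R^-1 by have [[-> _]|[-> _]] := minr_cases r k.+1%:R^-1.
    move: m2 mpos; rewrite /rho; move: (Num.min r k.+1%:R^-1) => q.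
    move: (k.+1%:R^-1 : R) => q'; lra.
  by exists p.
have := @Baire R R G (fun k => conj (oG k) (dG k)).
set c := (al + be) / 2. set rad := (be - al) / 2.
have rad0 : 0 < rad by rewrite /rad; lra.
move=> /(_ (ball c rad)) [].
- exists c; rewrite /ball /= subrr normr0 //.
- exact: ball_open.
move=> t [bt Gt].
have tab : al < t < be.
  move: bt; rewrite /ball /= /c /rad => h.
  have := ler_norm (c - t); have := ler_norm (- (c - t)); rewrite normrN.
  move: h; rewrite /c; lra.
have tab' : al <= t <= be by case/andP: tab => h1 h2; rewrite !ltW.
have dt := dpos t tab'.
pose k := Num.Def.archi_bound (dl t)^-1.
have hk : (dl t)^-1 < k%:R by apply: archi_boundP; rewrite invr_ge0 ltW.
have hk' : k.+1%:R^-1 < dl t.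
  rewrite invf_plt ?posrE ?ltr0n //.
  by apply: lt_trans hk _; rewrite ltr_nat.
have Gk : G k t by apply: Gt.
exfalso; apply: Gk; rewrite /S /=; split => //; exact: ltW.
Qed.

Lemma half_norm (R : realType) (x y : R) : `|(x + y) / 2| <= (`|x| + `|y|) / 2.
Proof.
rewrite normrM (ger0_norm (_ : 0 <= 2^-1 :> R)); last by rewrite invr_ge0.
by rewrite ler_wpM2r ?invr_ge0 // ler_normD.
Qed.

Lemma lip_max0 (R : realType) (a b : R) : `|Num.max 0 a - Num.max 0 b| <= `|a - b|.
Proof.
rewrite !maxr_absE !add0r !normrN.
have -> : (a + `|a|) / 2 - (b + `|b|) / 2 = ((a - b) + (`|a| - `|b|)) / 2 by ring.
apply: le_trans (half_norm _ _) _.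
have := ler_dist_dist a b. lra.
Qed.

Lemma lip_min1 (R : realType) (a b : R) : `|Num.min a 1 - Num.min b 1| <= `|a - b|.
Proof.
rewrite !minr_absE.
have -> : (a + 1 - `|a - 1|) / 2 - (b + 1 - `|b - 1|) / 2 = ((a - b) + - (`|a - 1| - `|b - 1|)) / 2 by ring.
apply: le_trans (half_norm _ _) _.
rewrite normrN; have := ler_dist_dist (a - 1) (b - 1).
have -> : a - 1 - (b - 1) = a - b by ring.
lra.
Qed.

Lemma clamp_lip (R : realType) (t t' : R) :
  `|Num.max 0 (Num.min t 1) - Num.max 0 (Num.min t' 1)| <= `|t - t'|.
Proof. exact: le_trans (lip_max0 _ _) (lip_min1 _ _). Qed.

Lemma ivt01 (R : realType) (phi : R -> R) (K : R) : 0 <= K ->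
  (forall t t', 0 <= t <= 1 -> 0 <= t' <= 1 -> `|phi t - phi t'| <= K * `|t - t'|) ->
  (phi 0 < 0 < phi 1) \/ (phi 1 < 0 < phi 0) ->
  exists t, 0 <= t <= 1 /\ phi t = 0.
Proof.
move=> K0 hL hs.
pose cl (t : R) := Num.max 0 (Num.min t 1).
have cl01 : forall t, 0 <= cl t <= 1.
  move=> t; rewrite /cl; have m1 := ge_minr t 1; move: m1; set m := Num.min t 1 => m1.
  by have [[-> ?]|[-> ?]] := maxr_cases 0 m; apply/andP; split; lra.
have clid : forall t, 0 <= t <= 1 -> cl t = t.
  move=> t /andP[t0 t1]; rewrite /cl; have [[-> ?]|[-> ?]] := minr_cases t 1.
    by have [[-> ?]|[-> ?]] := maxr_cases 0 t => //; lra.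
  have -> : t = 1 by lra.
  by have [[-> ?]|[-> ?]] := maxr_cases 0 (1:R) => //; lra.
pose psi t := phi (cl t).
have cpsi : continuous psi.
  move=> x; apply/cvgrPdist_lt => e e0.
  apply/nbhs_ballP; exists (e / (K + 1)) => /=; first by rewrite divr_gt0 //; lra.
  move=> y; rewrite /ball /= => bxy.
  apply: le_lt_trans (hL _ _ (cl01 x) (cl01 y)) _.
  have hcl := clamp_lip x y.
  have : K * `|cl x - cl y| <= K * `|x - y| by rewrite ler_wpM2l.
  have : K * `|x - y| < e.
    have h1 : K * `|x - y| <= (K + 1) * `|x - y| by rewrite ler_wpM2r //; lra.
    have h2 : (K + 1) * `|x - y| < e by rewrite mulrC -ltr_pdivlMr //; lra.
    lra.
  lra.
have := @IVT R psi 0 1 0 ler01 ltac:(by apply: continuous_subspaceT).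
rewrite /psi !clid ?lexx ?ler01 //.
case=> [|c].
  by case: hs => /andP[h1 h2]; apply/andP; split;
   [have := ge_minl (phi 0) (phi 1); lra | have := le_maxr (phi 0) (phi 1); lra
   |have := ge_minr (phi 0) (phi 1); lra | have := le_maxl (phi 0) (phi 1); lra].
rewrite in_itv /= => c01 hc; exists c; split => //.
by rewrite -(clid c c01).
Qed.

Local Close Scope classical_set_scope.


Lemma two_active (R : realType) (n : nat) (u v : 'I_n -> R) :
  (forall k, 0 <= u k) -> (forall k, `|v k| = u k) ->
  `|\sum_(k < n) v k| < \sum_(k < n) u k -> exists i, 0 < u i /\ u i < \sum_(k < n) u k.
Proof.
move=> u0 uv hlt.
have [//|H] := pselect (exists i, 0 < u i /\ u i < \sum_(k < n) u k).
exfalso.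
case: (pselect (exists j, 0 < u j)) => [[j uj]|none].
  have ge : \sum_(k < n) u k <= u j.
    by rewrite leNgt; apply/negP => h; apply: H; exists j.
  have S0 : \sum_(k < n | k != j) u k = 0.
    have := ge; rewrite (bigD1 j) //= => h.
    apply/le_anti/andP; split; first lra.
    by apply: sumr_ge0 => k _.
  have uk : forall k, k != j -> u k = 0.
    by move=> k kj; apply: (psumr_eq0P _ S0) => // l _.
  have vk : forall k, k != j -> v k = 0.
    by move=> k kj; apply/normr0_eq0; rewrite uv uk.
  have sv : \sum_(k < n) v k = v j.
    by rewrite (bigD1 j) //= big1 ?addr0 // => k kj; exact: vk.
  have su : \sum_(k < n) u k = u j.
    by rewrite (bigD1 j) //= big1 ?addr0 // => k kj; exact: uk.
  by move: hlt; rewrite sv su uv ltxx.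
have z : forall k, u k = 0.
  move=> k; apply/le_anti/andP; split; last exact: u0.
  by rewrite leNgt; apply/negP => h; apply: none; exists k.
have su : \sum_(k < n) u k = 0 by apply: big1 => k _; exact: z.
by rewrite su in hlt; have := normr_ge0 (\sum_(k < n) v k); lra.
Qed.

Lemma arith_contra (R : realType) (R1 R2 R3 P Aa Ab ak E1 E2 E3 : R) :
  R1 = R2 + R3 -> `| `|R1| - P| <= E1 -> `| `|R2| - Ab| <= E2 -> `| `|R3| - Aa| <= E3 ->
  ak <= Aa + Ab - P -> ak <= P - Ab + Aa -> ak <= P - Aa + Ab -> E1 + E2 + E3 < ak -> False.
Proof.
move=> E h1 h2 h3 c1 c2 c3 ce.
rewrite E in h1.
move: h1 h2 h3; rewrite !ler_norml.
have [[-> ?]|[-> ?]] := absr_cases (R2 + R3); have [[-> ?]|[-> ?]] := absr_cases R2;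
have [[-> ?]|[-> ?]] := absr_cases R3; lra.
Qed.

Definition Dr (R : realType) (n : nat) (F : 'rV[R]_n -> itv R) u e :=
  ((F (u + e)).2 - (F (u + e)).1) - ((F u).2 - (F u).1).

Lemma r_model (R : realType) (n : nat) (F : 'rV[R]_n -> itv R) (gF : 'rV[R]_n -> 'I_n -> itv R) z :
  model_at F gF z -> (forall i, (gF z i).1 <= (gF z i).2) ->
  forall eps, 0 < eps -> exists delta, 0 < delta /\ forall e, enorm e < delta ->
   `| `|Dr F z e| - omf (ga gF z) (gb gF z) e| <= 2 * eps * enorm e.
Proof.
move=> hM hV eps e0; have [dl [dl0 hdl]] := hM eps e0; exists dl; split => // e he.
have [k1 k2] := hdl e he.
have P := Pm_dec e hV. have Q := Qm_dec e hV.
have om : omf (ga gF z) (gb gF z) e = Qm (ga gF z) (gb gF z) e - Pm (ga gF z) (gb gF z) e.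
  by move: P Q; lra.
have dr : `|Dr F z e| = dmax F z e - dmin F z e.
  rewrite /dmax /dmin maxr_absE minr_absE.
  have -> : Dr F z e = ((F (z + e)).2 - (F z).2) - ((F (z + e)).1 - (F z).1) by rewrite /Dr; ring.
  by rewrite distrC; field.
rewrite dr om.
have -> : dmax F z e - dmin F z e - (Qm (ga gF z) (gb gF z) e - Pm (ga gF z) (gb gF z) e) =
  (dmax F z e - Qm (ga gF z) (gb gF z) e) - (dmin F z e - Pm (ga gF z) (gb gF z) e) by ring.
apply: le_trans (ler_normB _ _) _; lra.
Qed.

Lemma omf_hbasis (R : realType) (n : nat) (a b : 'I_n -> R) (h : R) i :
  omf a b (h *: ebasis R i) = `|h| * (b i - a i).
Proof.
rewrite /omf (bigD1 i) //= big1 ?addr0.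
  by rewrite mxE ebasisE eqxx mulr1.
by move=> j /negPf ji; rewrite mxE ebasisE ji mulr0 normr0 mul0r.
Qed.

Lemma omfZ (R : realType) (n : nat) (a b : 'I_n -> R) (c : R) e :
  omf a b (c *: e) = `|c| * omf a b e.
Proof. by rewrite /omf mulr_sumr; apply: eq_bigr => k _; rewrite mxE normrM mulrA. Qed.

Lemma etfZ (R : realType) (n : nat) (a b : 'I_n -> R) (c : R) e :
  etf a b (c *: e) = c * etf a b e.
Proof. by rewrite /etf mulr_sumr; apply: eq_bigr => k _; rewrite mxE mulrA. Qed.

Lemma kkfZ (R : realType) (n : nat) (w w' : R) (a b : 'I_n -> R) (c : R) e :
  kkf w w' a b (c *: e) = c * kkf w w' a b e.
Proof. by rewrite /kkf mulr_sumr; apply: eq_bigr => k _; rewrite mxE mulrA. Qed.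

Lemma shifted_vec (R : realType) (n : nat) (a b : 'I_n -> R) (c : R) (d : 'rV[R]_n) i : 0 <= c ->
  omf a b ((2 * c * d 0 i) *: ebasis R i - c *: d) = c * omf a b d /\
  l1 ((2 * c * d 0 i) *: ebasis R i - c *: d) = c * l1 d.
Proof.
move=> c0.
have key : forall k, `|((2 * c * d 0 i) *: ebasis R i - c *: d) 0 k| = c * `|d 0 k|.
  move=> k; rewrite !mxE; case: eqP => [->|_].
    by rewrite mulr1 (_ : 2 * c * d 0 i - c * d 0 i = c * d 0 i); [rewrite normrM ger0_norm|ring].
  by rewrite mulr0 sub0r normrN normrM ger0_norm.
split.
  by rewrite /omf mulr_sumr; apply: eq_bigr => k _; rewrite key mulrA.
by rewrite /l1 mulr_sumr; apply: eq_bigr => k _; rewrite key.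
Qed.


Lemma eqW (R : realType) (x y : R) : x = y -> x <= y.
Proof. by move=> ->. Qed.

Lemma inorm_ge0 (R : realType) (A : itv R) : 0 <= inorm A.
Proof. by rewrite /inorm; apply: le_trans (le_maxl _ _). Qed.

Lemma wd_lip (R : realType) (n : nat) (gF : 'rV[R]_n -> 'I_n -> itv R) (X : 'rV[R]_n -> Prop) (M : R) :
  (forall y1 y2, X y1 -> X y2 -> inormn (fun i => igH (gF y1 i) (gF y2 i)) <= M * enorm (y1 - y2)) ->
  forall y1 y2 k, X y1 -> X y2 ->
  `|(gb gF y1 k - ga gF y1 k) - (gb gF y2 k - ga gF y2 k)| <= 2 * (M * enorm (y1 - y2)).
Proof.
move=> hL y1 y2 k X1 X2.
have h1 : inorm (igH (gF y1 k) (gF y2 k)) <= M * enorm (y1 - y2).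
  apply: le_trans (hL _ _ X1 X2); rewrite /inormn (bigD1 k) //= lerDl.
  by apply: sumr_ge0 => j _; exact: inorm_ge0.
rewrite inorm_igH in h1.
have a1 := le_maxl `|(gF y1 k).1 - (gF y2 k).1| `|(gF y1 k).2 - (gF y2 k).2|.
have a2 := le_maxr `|(gF y1 k).1 - (gF y2 k).1| `|(gF y1 k).2 - (gF y2 k).2|.
have -> : gb gF y1 k - ga gF y1 k - (gb gF y2 k - ga gF y2 k) =
   ((gF y1 k).2 - (gF y2 k).2) - ((gF y1 k).1 - (gF y2 k).1) by rewrite /ga /gb; ring.
apply: le_trans (ler_normB _ _) _; lra.
Qed.

Lemma seg_in (R : realType) (n : nat) (X : 'rV[R]_n -> Prop) x1 x2 t :
  Defs.convex_set X -> X x1 -> X x2 -> 0 <= t <= 1 -> X (x1 + t *: (x2 - x1)).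
Proof.
move=> hX X1 X2 t01.
have -> : x1 + t *: (x2 - x1) = t *: x2 + (1 - t) *: x1 by apply/rowP => j; rewrite !mxE; ring.
exact: hX.
Qed.

Lemma SA_lemma (R : realType) (n : nat) (F : 'rV[R]_n -> itv R)
  (gF : 'rV[R]_n -> 'I_n -> itv R) (X : 'rV[R]_n -> Prop) (M : R) :
  Defs.convex_set X -> 0 < M ->
  (forall y1 y2, X y1 -> X y2 -> inormn (fun i => igH (gF y1 i) (gF y2 i)) <= M * enorm (y1 - y2)) ->
  (forall z, X z -> model_at F gF z) -> (forall z, X z -> forall i, (gF z i).1 <= (gF z i).2) ->
  forall x1 x2, X x1 -> X x2 -> forall t0, 0 <= t0 <= 1 ->
  `|etf (ga gF (x1 + t0 *: (x2 - x1))) (gb gF (x1 + t0 *: (x2 - x1))) (x2 - x1)| =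
     omf (ga gF (x1 + t0 *: (x2 - x1))) (gb gF (x1 + t0 *: (x2 - x1))) (x2 - x1).
Proof.
move=> hX M0 hL hM hV x1 x2 X1 X2 t0 t0i.
set d := x2 - x1.
pose z t := x1 + t *: d.
have Xz : forall t, 0 <= t <= 1 -> X (z t) by move=> t ti; exact: seg_in.
pose wd y k := gb gF y k - ga gF y k.
pose om t := omf (ga gF (z t)) (gb gF (z t)) d.
apply/le_anti/andP; split; first exact: et_le_om (hV _ (Xz _ t0i)).
rewrite leNgt; apply/negP => hlt.
have [i [Bp BA]] : exists i, 0 < `|d 0 i| * wd (z t0) i /\ `|d 0 i| * wd (z t0) i < om t0.
  apply: (two_active (v := fun k => d 0 k * wd (z t0) k)).
  - move=> k; apply: mulr_ge0 => //; rewrite subr_ge0; exact: hV (Xz _ t0i) k.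
  - move=> k; rewrite normrM (ger0_norm (_ : 0 <= wd (z t0) k)) //.
    rewrite subr_ge0; exact: hV (Xz _ t0i) k.
  - exact: hlt.
set B0 := `|d 0 i| * wd (z t0) i in Bp BA.
set A0 := om t0 in BA.
pose kap := Num.min B0 (A0 - B0).
have kap0 : 0 < kap by rewrite /kap; have [[-> _]|[-> _]] := minr_cases B0 (A0 - B0) => //; lra.
have kB : kap <= B0 := ge_minl _ _.
have kA : kap <= A0 - B0 := ge_minr _ _.
have wd0 : forall t, 0 <= t <= 1 -> forall k, 0 <= wd (z t) k.
  by move=> t ti k; rewrite subr_ge0; exact: hV (Xz _ ti) k.
have di0 : 0 < `|d 0 i|.
  rewrite lt_def normr_ge0 andbT; apply/negP => /eqP h.
  by move: Bp; rewrite /B0 h mul0r ltxx.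
set N := enorm d. set S1 := l1 d.
have N0 : 0 < N by apply: lt_le_trans di0 (abs_le_enorm _ _).
have S10 : 0 < S1 by apply: lt_le_trans di0 (abs_le_l1 _ _).
have diS : `|d 0 i| <= S1 := abs_le_l1 _ _.
have NS : N <= S1 := enorm_le_l1 _.
pose C := 2 * M * N * S1.
have C0 : 0 < C by rewrite /C !mulr_gt0.
have zdiff : forall t t', z t - z t' = (t - t') *: d.
  by move=> t t'; apply/rowP => j; rewrite !mxE; ring.
have wdL : forall t t' k, 0 <= t <= 1 -> 0 <= t' <= 1 ->
    `|wd (z t) k - wd (z t') k| <= 2 * M * N * `|t - t'|.
  move=> t t' k ti ti'; apply: le_trans (wd_lip hL k (Xz _ ti) (Xz _ ti')) _.
  by rewrite zdiff enormZ -/N; apply/eqW; ring.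
have LA : forall t t', 0 <= t <= 1 -> 0 <= t' <= 1 -> `|om t - om t'| <= C * `|t - t'|.
  move=> t t' ti ti'.
  have -> : om t - om t' = \sum_(k < n) `|d 0 k| * (wd (z t) k - wd (z t') k).
    by rewrite /om /omf -sumrB; apply: eq_bigr => k _; rewrite /wd; ring.
  apply: le_trans (ler_norm_sum _ _ _) _.
  have -> : C * `|t - t'| = \sum_(k < n) `|d 0 k| * (2 * M * N * `|t - t'|).
    by rewrite -mulr_suml /C /S1 /l1; ring.
  apply: ler_sum => k _; rewrite normrM normr_id; apply: ler_wpM2l => //; exact: wdL.
have LB : forall t t', 0 <= t <= 1 -> 0 <= t' <= 1 ->
    `| `|d 0 i| * wd (z t) i - `|d 0 i| * wd (z t') i| <= C * `|t - t'|.
  move=> t t' ti ti'; rewrite -mulrBr normrM normr_id.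
  have h := wdL t t' i ti ti'.
  have h2 : `|d 0 i| * `|wd (z t) i - wd (z t') i| <= S1 * `|wd (z t) i - wd (z t') i|.
    by apply: ler_wpM2r.
  have h3 : S1 * `|wd (z t) i - wd (z t') i| <= S1 * (2 * M * N * `|t - t'|).
    by apply: ler_wpM2l => //; exact: ltW.
  apply: le_trans h2 (le_trans h3 _); apply/eqW; rewrite /C; ring.
pose rho := kap / (4 * C).
have rho0 : 0 < rho by rewrite divr_gt0 // mulr_gt0.
pose rp := Num.min rho (1 / 2).
have rp0 : 0 < rp by rewrite /rp; have [[-> _]|[-> _]] := minr_cases rho (1 / 2) => //; lra.
have rpr : rp <= rho := ge_minl _ _.
have rph : rp <= 1 / 2 := ge_minr _ _.
case/andP: t0i => t00 t01.
have [al [be [ab al0 be1 alt bet]]] : exists al be, [/\ al < be, 0 <= al, be <= 1, t0 - rho <= al & be <= t0 + rho].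
  case: (leP t0 (1 / 2)) => h.
    by exists t0, (t0 + rp); split; lra.
  by exists (t0 - rp), t0; split; lra.
have inI : forall t, al <= t <= be -> 0 <= t <= 1 /\ `|t - t0| <= rho.
  move=> t /andP[h1 h2]; split; first by apply/andP; split; lra.
  by rewrite ler_norml; apply/andP; split; lra.
have marg : forall t, al <= t <= be -> `|om t - A0| <= kap / 4 /\
      `| `|d 0 i| * wd (z t) i - B0| <= kap / 4.
  move=> t ti; have [ti' tr] := inI t ti.
  have t0i : 0 <= t0 <= 1 by rewrite t00 t01.
  have e : C * `|t - t0| <= kap / 4.
    have : C * `|t - t0| <= C * rho by rewrite ler_wpM2l // ltW.
    have -> : C * rho = kap / 4 by rewrite /rho; field; rewrite ?mulf_neq0 ?lt0r_neq0.
    done.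
  by split; [apply: le_trans (LA _ _ ti' t0i) e | apply: le_trans (LB _ _ ti' t0i) e].
pose eps := kap / (16 * S1).
have eps0 : 0 < eps by rewrite divr_gt0 // mulr_gt0.
have hdl : forall t, exists dl, 0 < dl /\ (al <= t <= be -> forall e, enorm e < dl ->
    `| `|Dr F (z t) e| - omf (ga gF (z t)) (gb gF (z t)) e| <= 2 * eps * enorm e).
  move=> t; case: (pselect (al <= t <= be)) => ti.
    have [ti' _] := inI t ti.
    have [dl [dl0 h]] := r_model (hM _ (Xz _ ti')) (hV _ (Xz _ ti')) eps0.
    by exists dl; split => // _.
  by exists 1; split => //.
case: (@boolp.choice _ _ _ hdl) => dl Hdl.
have [t [t' [alt' tt' tbe h1 h2]]] := @two_point R al be (fun t => dl t / (2 * S1)) ab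
   ltac:(by move=> t ti; rewrite divr_gt0 // ?mulr_gt0 //; case: (Hdl t)).
set a := t' - t in h1 h2.
have a0 : 0 < a by rewrite /a subr_gt0.
have ti : al <= t <= be by rewrite alt' /=; apply: le_trans (ltW tt') tbe.
have ti2 : al <= t' <= be by rewrite tbe andbT; apply: le_trans alt' (ltW tt').
have [_ Mt] := Hdl t. have [_ Mt2] := Hdl t'.
have {}Mt := Mt ti. have {}Mt2 := Mt2 ti2.
have dlt_b : 2 * a * S1 < dl t.
  by move: h1; rewrite ltr_pdivlMr ?mulr_gt0 // => h; apply: le_lt_trans h; apply/eqW; ring.
have dlt2_b : 2 * a * S1 < dl t'.
  by move: h2; rewrite ltr_pdivlMr ?mulr_gt0 // => h; apply: le_lt_trans h; apply/eqW; ring.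
pose v := (2 * a * d 0 i) *: ebasis R i.
have uu' : z t' = z t + a *: d by apply/rowP => j; rewrite /z /a !mxE; ring.
have [omv l1v] := shifted_vec (ga gF (z t')) (gb gF (z t')) d i (ltW a0).
have n2 : `|2 * a * d 0 i| = 2 * a * `|d 0 i|.
  by rewrite !normrM (ger0_norm (ltW a0)) (ger0_norm (_ : 0 <= 2 :> R)).
have nv : enorm v = 2 * a * `|d 0 i| by rewrite /v enorm_hbasis n2.
have nv2 : enorm (v - a *: d) <= a * S1 by rewrite /v -l1v; exact: enorm_le_l1.
have nv3 : enorm (a *: d) = a * N by rewrite enormZ ger0_norm // ltW.
have aS : 0 <= a * S1 by rewrite mulr_ge0 // ltW.
have a2 : 0 <= 2 * a by rewrite mulr_ge0 // ltW.
have lt1 : enorm v < dl t.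
  rewrite nv; apply: le_lt_trans dlt_b; exact: ler_wpM2l.
have lt2 : enorm (v - a *: d) < dl t'.
  apply: le_lt_trans nv2 _; apply: le_lt_trans dlt2_b; lra.
have lt3 : enorm (a *: d) < dl t.
  rewrite nv3; apply: le_lt_trans dlt_b.
  have := ler_wpM2l (ltW a0) NS; lra.
have M1 := Mt v lt1. have M2 := Mt2 (v - a *: d) lt2. have M3 := Mt (a *: d) lt3.
rewrite /v omf_hbasis n2 -/v in M1.
rewrite /v omv -/v in M2.
rewrite omfZ (ger0_norm (ltW a0)) in M3.
have ep0 : 0 <= eps by exact: ltW.
have E1b : 2 * eps * enorm v <= 4 * eps * a * S1.
  rewrite nv; have : 4 * eps * a * `|d 0 i| <= 4 * eps * a * S1.
    apply: ler_wpM2l diS; apply: mulr_ge0; [exact: mulr_ge0|exact: ltW].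
  by apply: le_trans; apply/eqW; ring.
have E2b : 2 * eps * enorm (v - a *: d) <= 2 * eps * a * S1.
  have h := ler_wpM2l (mulr_ge0 (ler0n R 2) ep0) nv2.
  by apply: le_trans h _; apply/eqW; ring.
have E3b : 2 * eps * enorm (a *: d) <= 2 * eps * a * S1.
  rewrite nv3; have h := ler_wpM2l (mulr_ge0 (mulr_ge0 (ler0n R 2) ep0) (ltW a0)) NS.
  by apply: le_trans _ h; apply/eqW; ring.
have Rsum : Dr F (z t) v = Dr F (z t') (v - a *: d) + Dr F (z t) (a *: d).
  have e1 : z t' + (v - a *: d) = z t + v by rewrite uu'; apply/rowP => j; rewrite !mxE; ring.
  have e2 : z t + a *: d = z t' by rewrite uu'.
  by rewrite /Dr e1 e2; ring.
have [mt mtB] := marg t ti. have [mt2 _] := marg t' ti2.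
have epsE : 16 * eps * S1 = kap by rewrite /eps; field; apply: lt0r_neq0.
set Bt := `|d 0 i| * wd (z t) i in M1 mtB.
have c1 : a * kap <= a * om t + a * om t' - 2 * a * Bt.
  have : kap <= om t + om t' - 2 * Bt.
    by move: mt mt2 mtB kA; rewrite !ler_norml; lra.
  move/(ler_wpM2l (ltW a0)) => h; apply: le_trans h _; apply/eqW; ring.
have c2 : a * kap <= 2 * a * Bt - a * om t' + a * om t.
  have : kap <= 2 * Bt - om t' + om t.
    by move: mt mt2 mtB kB; rewrite !ler_norml; lra.
  move/(ler_wpM2l (ltW a0)) => h; apply: le_trans h _; apply/eqW; ring.
have c3 : a * kap <= 2 * a * Bt - a * om t + a * om t'.
  have : kap <= 2 * Bt - om t + om t'.
    by move: mt mt2 mtB kB; rewrite !ler_norml; lra.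
  move/(ler_wpM2l (ltW a0)) => h; apply: le_trans h _; apply/eqW; ring.
have ce : 2 * eps * enorm v + 2 * eps * enorm (v - a *: d) + 2 * eps * enorm (a *: d) < a * kap.
  have : 4 * eps * a * S1 + 2 * eps * a * S1 + 2 * eps * a * S1 = a * kap / 2.
    by rewrite -epsE; field.
  have : 0 < a * kap by rewrite mulr_gt0.
  lra.
have eB : 2 * a * `|d 0 i| * (gb gF (z t) i - ga gF (z t) i) = 2 * a * Bt by rewrite /Bt /wd; ring.
rewrite eB in M1.
apply: (arith_contra Rsum M1 M2 M3).
- exact: c1.
- exact: c2.
- exact: c3.
- exact: ce.
Qed.


Lemma kk_mono (R : realType) (n : nat) (F : 'rV[R]_n -> itv R)
  (gF : 'rV[R]_n -> 'I_n -> itv R) (X : 'rV[R]_n -> Prop) (M s0 w w' : R) :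
  Defs.convex_set X -> 0 < M ->
  (forall y1 y2, X y1 -> X y2 -> inormn (fun i => igH (gF y1 i) (gF y2 i)) <= M * enorm (y1 - y2)) ->
  (forall z, X z -> model_at F gF z) -> (forall z, X z -> forall i, (gF z i).1 <= (gF z i).2) ->
  0 < s0 -> sc_prop F X s0 ->
  0 <= w <= 1 -> 0 <= w' <= 1 -> w + w' = 1 ->
  forall x1 x2, X x1 -> X x2 ->
  s0 * ssq (x2 - x1) <= kkf w w' (ga gF x2) (gb gF x2) (x2 - x1) - kkf w w' (ga gF x1) (gb gF x1) (x2 - x1).
Proof.
move=> hX M0 hL hM hV s0p hS hw hw' hww x1 x2 X1 X2.
have pair : forall y1 y2, X y1 -> X y2 ->
   `|etf (ga gF y1) (gb gF y1) (y2 - y1)| = omf (ga gF y1) (gb gF y1) (y2 - y1) ->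
   `|etf (ga gF y2) (gb gF y2) (y2 - y1)| = omf (ga gF y2) (gb gF y2) (y2 - y1) ->
   (0 <= etf (ga gF y1) (gb gF y1) (y2 - y1) /\ 0 <= etf (ga gF y2) (gb gF y2) (y2 - y1)) \/
   (etf (ga gF y1) (gb gF y1) (y2 - y1) <= 0 /\ etf (ga gF y2) (gb gF y2) (y2 - y1) <= 0) ->
   s0 * ssq (y2 - y1) <= kkf w w' (ga gF y2) (gb gF y2) (y2 - y1) - kkf w w' (ga gF y1) (gb gF y1) (y2 - y1).
  move=> y1 y2 Y1 Y2 s1 s2 sg.
  have [hP hQ] := PQ_mono s0p hS hM Y1 Y2.
  exact: (same_sign_mono hw hw' hww (hV _ Y1) (hV _ Y2) s1 s2 sg hP hQ).
set d := x2 - x1.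
pose z t := x1 + t *: d.
have z0 : z 0 = x1 by rewrite /z scale0r addr0.
have z1 : z 1 = x2 by rewrite /z scale1r /d addrC subrK.
have SA : forall t, 0 <= t <= 1 ->
    `|etf (ga gF (z t)) (gb gF (z t)) d| = omf (ga gF (z t)) (gb gF (z t)) d.
  by move=> t ti; exact: (SA_lemma hX M0 hL hM hV X1 X2 ti).
have SA0 := SA 0 ltac:(by rewrite lexx ler01). rewrite z0 in SA0.
have SA1 := SA 1 ltac:(by rewrite lexx ler01). rewrite z1 in SA1.
pose phi t := etf (ga gF (z t)) (gb gF (z t)) d.
case: (pselect ((0 <= phi 0 /\ 0 <= phi 1) \/ (phi 0 <= 0 /\ phi 1 <= 0))) => sg.
  by apply: pair => //; rewrite /phi z0 z1 in sg.
have opp : (phi 0 < 0 < phi 1) \/ (phi 1 < 0 < phi 0).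
  case: (ltP (phi 0) 0) => a; case: (ltP (phi 1) 0) => b.
  - by exfalso; apply: sg; right; split; apply: ltW.
  - case: (ltP 0 (phi 1)) => c; first by left; apply/andP; split.
    by exfalso; apply: sg; right; split; [exact: ltW|].
  - case: (ltP 0 (phi 0)) => c; first by right; apply/andP; split.
    by exfalso; apply: sg; right; split; [|exact: ltW].
  - by exfalso; apply: sg; left; split.
set N := enorm d. set S1 := l1 d.
have N0 : 0 <= N := enorm_ge0 _.
have S10 : 0 <= S1 := l1_ge0 _.
have zdiff : forall t t', z t - z t' = (t - t') *: d.
  by move=> t t'; apply/rowP => j; rewrite !mxE; ring.
have Xz : forall t, 0 <= t <= 1 -> X (z t) by move=> t ti; exact: seg_in.
have [ts [tsi phi0]] : exists t, 0 <= t <= 1 /\ phi t = 0.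
  apply: (@ivt01 R phi (2 * M * N * S1)); first by rewrite !mulr_ge0 // ltW.
    move=> t t' ti ti'.
    have -> : phi t - phi t' = \sum_(k < n) d 0 k * ((gb gF (z t) k - ga gF (z t) k) - (gb gF (z t') k - ga gF (z t') k)).
      by rewrite /phi /etf -sumrB; apply: eq_bigr => k _; ring.
    apply: le_trans (ler_norm_sum _ _ _) _.
    have -> : 2 * M * N * S1 * `|t - t'| = \sum_(k < n) `|d 0 k| * (2 * (M * enorm (z t - z t'))).
      by rewrite -mulr_suml zdiff enormZ /S1 /l1 /N; ring.
    apply: ler_sum => k _; rewrite normrM; apply: ler_wpM2l => //.
    have := wd_lip hL k (Xz _ ti) (Xz _ ti'). done.
  exact: opp.
case/andP: tsi => ts0 ts1.
have tsp : 0 < ts.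
  rewrite lt_def ts0 andbT; apply/negP => /eqP h; move: phi0; rewrite h => h0.
  by case: opp; rewrite h0 ltxx // andbF.
have ts1' : ts < 1.
  rewrite lt_def ts1 andbT; apply/negP => /eqP h; move: phi0; rewrite -h => h0.
  by case: opp; rewrite h0 ltxx // andbF.
set zs := z ts.
have Xs : X zs by apply: Xz; rewrite ts0 ts1.
have SAs := SA ts ltac:(by rewrite ts0 ts1).
have e1 : zs - x1 = ts *: d by rewrite /zs /z addrC addKr.
have e2 : x2 - zs = (1 - ts) *: d by apply/rowP => j; rewrite /zs /z /d !mxE; ring.
have m1 : s0 * ssq (zs - x1) <= kkf w w' (ga gF zs) (gb gF zs) (zs - x1) - kkf w w' (ga gF x1) (gb gF x1) (zs - x1).
  apply: pair => //.
  - by rewrite e1 etfZ omfZ normrM (ger0_norm ts0) SA0.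
  - by rewrite e1 etfZ omfZ normrM (ger0_norm ts0) SAs.
  - rewrite e1 !etfZ /zs -/(phi ts) phi0 mulr0.
    case: (leP 0 (etf (ga gF x1) (gb gF x1) d)) => h.
      by left; split => //; rewrite mulr_ge0.
    by right; split => //; rewrite mulr_ge0_le0 // ltW.
have m2 : s0 * ssq (x2 - zs) <= kkf w w' (ga gF x2) (gb gF x2) (x2 - zs) - kkf w w' (ga gF zs) (gb gF zs) (x2 - zs).
  have ts1p : 0 <= 1 - ts by rewrite subr_ge0.
  apply: pair => //.
  - by rewrite e2 etfZ omfZ normrM (ger0_norm ts1p) SAs.
  - by rewrite e2 etfZ omfZ normrM (ger0_norm ts1p) SA1.
  - rewrite e2 !etfZ /zs -/(phi ts) phi0 mulr0.
    case: (leP 0 (etf (ga gF x2) (gb gF x2) d)) => h.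
      by left; split => //; rewrite mulr_ge0.
    by right; split => //; rewrite mulr_ge0_le0 // ltW.
rewrite e1 !kkfZ ssqZ in m1.
rewrite e2 !kkfZ ssqZ in m2.
set Sd := ssq d in m1 m2 *.
set K1 := kkf w w' (ga gF x1) (gb gF x1) d in m1 *.
set K2 := kkf w w' (ga gF x2) (gb gF x2) d in m2 *.
set Ks := kkf w w' (ga gF zs) (gb gF zs) d in m1 m2.
have m1' : ts * (s0 * ts * Sd) <= ts * (Ks - K1).
  have -> : ts * (s0 * ts * Sd) = s0 * (ts ^+ 2 * Sd) by ring.
  by have -> : ts * (Ks - K1) = ts * Ks - ts * K1 by ring.
rewrite ler_pM2l // in m1'.
have m2' : (1 - ts) * (s0 * (1 - ts) * Sd) <= (1 - ts) * (K2 - Ks).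
  have -> : (1 - ts) * (s0 * (1 - ts) * Sd) = s0 * ((1 - ts) ^+ 2 * Sd) by ring.
  by have -> : (1 - ts) * (K2 - Ks) = (1 - ts) * K2 - (1 - ts) * Ks by ring.
rewrite ler_pM2l ?subr_gt0 // in m2'.
have -> : s0 * Sd = s0 * ts * Sd + s0 * (1 - ts) * Sd by ring.
move: m1' m2'; clear; lra.
Qed.

Theorem theorem5p5 (R : realType) (n : nat) (w w' : R)
  (hw : 0 <= w <= 1) (hw' : 0 <= w' <= 1) (hww : w + w' = 1)
  (X : 'rV[R]_n -> Prop) (F : 'rV[R]_n -> itv R) (gF : 'rV[R]_n -> 'I_n -> itv R)
  (hXne : exists x, X x) (hXcvx : convex_set X)
  (hF : is_IVF F)
  (hsc : strongly_convex_on X F)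
  (hdiff : forall x, X x -> gH_differentiable_at F x)
  (hgrad : is_gH_gradient X F gF)
  (hlip : gH_Lipschitz_gradient_on X gF) :
  exists sigma L : R, 0 < sigma /\ 0 < L /\
    forall xb, efficient X F xb ->
    forall alpha : R, 0 <= alpha <= 2 * sigma / L ^+ 2 ->
    forall x, X x ->
      enorm ((x - alpha *: Wmap w w' (gF x)) - (xb - alpha *: Wmap w w' (gF xb)))
        <= enorm (x - xb).
Proof.
have [s0 [s0p hS]] := sc_from_hyp hXcvx hsc.
case: hlip => M [M0 hL].
have hMV : forall z, X z -> (forall i, (gF z i).1 <= (gF z i).2) /\ model_at F gF z.
  move=> z Xz; have [h1 h2] := model_lemma (hdiff z Xz) (hgrad z Xz).
  by split.
have hV : forall z, X z -> forall i, (gF z i).1 <= (gF z i).2 by move=> z Xz; case: (hMV z Xz).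
have hM : forall z, X z -> model_at F gF z by move=> z Xz; case: (hMV z Xz).
exists s0, M; split => //; split => //.
move=> xb [Xb _] al hal x Xx.
have -> : (x - al *: Wmap w w' (gF x)) - (xb - al *: Wmap w w' (gF xb)) =
    (x - xb) - al *: (Wmap w w' (gF x) - Wmap w w' (gF xb)).
  by apply/rowP => j; rewrite !mxE; ring.
apply: (contraction s0p M0 hal).
- have -> : \sum_(i < n) (x - xb) 0 i * (Wmap w w' (gF x) - Wmap w w' (gF xb)) 0 i =
      kkf w w' (ga gF x) (gb gF x) (x - xb) - kkf w w' (ga gF xb) (gb gF xb) (x - xb).
    by rewrite /kkf -sumrB; apply: eq_bigr => i _; rewrite !mxE /ga /gb; ring.
  exact: (kk_mono hXcvx M0 hL hM hV s0p hS hw hw' hww Xb Xx).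
- set g := Wmap w w' (gF x) - Wmap w w' (gF xb).
  have l1g : l1 g <= M * enorm (x - xb).
    apply: le_trans (hL x xb Xx Xb); rewrite /l1 /inormn; apply: ler_sum => i _.
    rewrite /g !mxE inorm_igH.
    set m := Num.max _ _.
    have ma := le_maxl `|(gF x i).1 - (gF xb i).1| `|(gF x i).2 - (gF xb i).2|.
    have mb := le_maxr `|(gF x i).1 - (gF xb i).1| `|(gF x i).2 - (gF xb i).2|.
    rewrite -/m in ma mb.
    have -> : w * (gF x i).1 + w' * (gF x i).2 - (w * (gF xb i).1 + w' * (gF xb i).2) =
       w * ((gF x i).1 - (gF xb i).1) + w' * ((gF x i).2 - (gF xb i).2) by ring.
    apply: le_trans (ler_normD _ _) _.
    case/andP: hw => w0 _; case/andP: hw' => w0' _.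
    rewrite !normrM (ger0_norm w0) (ger0_norm w0').
    have h1 : w * `|(gF x i).1 - (gF xb i).1| <= w * m by apply: ler_wpM2l.
    have h2 : w' * `|(gF x i).2 - (gF xb i).2| <= w' * m by apply: ler_wpM2l.
    have -> : m = w * m + w' * m by rewrite -mulrDl hww mul1r.
    exact: lerD.
  have l10 := l1_ge0 g.
  apply: le_trans (ssq_le_l1 g) _.
  rewrite -enorm_sq -exprMn !expr2.
  by apply: ler_pM.
Qed.
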